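(* In every T2R semigroup $S=S_0\cup S_1$, we have $S_0^2=S_0$.
   Context: A semigroup $S$ is a $\Delta$-semigroup if the lattice of all congruences of $S$ is a chain with respect to inclusion. A semigroup $N$ with zero $0$ is nil if every element has some power equal to $0$; non-trivial means having more than one element. A T2R semigroup is a $\Delta$-semigroup $S$ which is the disjoint union of a non-trivial nil ideal $S_0$ (with zero $0$, which is then the zero of $S$) and a subsemigroup $S_1=\{u,v\}$, $u\neq v$, which is a right zero semigroup ($xy=y$ for $x,y\in S_1$). $S_0^2=\{xy:x,y\in S_0\}$. *)

(* Defs.v *)
From Stdlib Require Import Arith.

Section SemigroupDefs.
Context {T : Type} (op : T -> T -> T).

Definition associative_op : Prop :=
  forall x y z : T, op x (op y z) = op (op x y) z.

Definition is_congruence (r : T -> T -> Prop) : Prop :=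
  (forall x, r x x) /\
  (forall x y, r x y -> r y x) /\
  (forall x y z, r x y -> r y z -> r x z) /\
  (forall x y z, r x y -> r (op z x) (op z y)) /\
  (forall x y z, r x y -> r (op x z) (op y z)).

Definition delta_semigroup : Prop :=
  associative_op /\
  forall r s : T -> T -> Prop, is_congruence r -> is_congruence s ->
    (forall x y, r x y -> s x y) \/ (forall x y, s x y -> r x y).

(* Positive powers: spow x n = x^(n+1). *)
Fixpoint spow (x : T) (n : nat) : T :=
  match n with
  | O => x
  | S n' => op x (spow x n')
  end.

Definition T2R (S0 : T -> Prop) (z u v : T) : Prop :=
  delta_semigroup /\
  (forall x y, S0 x -> S0 (op x y)) /\
  (forall x y, S0 y -> S0 (op x y)) /\
  S0 z /\ (forall x, S0 x -> op z x = z /\ op x z = z) /\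
  (forall x, S0 x -> exists n, spow x n = z) /\
  (exists x, S0 x /\ x <> z) /\
  (* S1 = {u, v} is a two-element right zero semigroup *)
  u <> v /\
  op u u = u /\ op u v = v /\ op v u = u /\ op v v = v /\
  (forall x, S0 x \/ x = u \/ x = v) /\
  ~ S0 u /\ ~ S0 v.

End SemigroupDefs.

(* Main.v *)
Require Import Defs.
From Stdlib Require Import Classical.

Theorem proposition7 (T : Type) (op : T -> T -> T) (S0 : T -> Prop) (z u v : T) :
  T2R op S0 z u v ->
  forall x, S0 x -> exists y w, S0 y /\ S0 w /\ x = op y w.
Proof.
  intros H x Hx.
  destruct H as [[Hass Hchain] [HR [HL [Hz [Hzero [_ [_ [Huv [Huu [Huv' [Hvu [Hvv [Hcov [Hu0 Hv0]]]]]]]]]]]]]].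
  set (I := fun a => exists y w, S0 y /\ S0 w /\ a = op y w).
  change (I x).
  apply NNPP; intro HnI.
  set (S1 := fun a => a = u \/ a = v).
  assert (Hu1 : S1 u) by (left; reflexivity).
  assert (Hv1 : S1 v) by (right; reflexivity).
  assert (rz : forall a b, S1 a -> S1 b -> op a b = b).
  { intros a b [-> | ->] [-> | ->]; assumption. }
  assert (dis : forall a, S0 a -> S1 a -> False).
  { intros a Ha [-> | ->]; auto. }
  assert (Ileft : forall c y, I y -> I (op c y)).
  { intros c y [y1 [y2 [H1 [H2 ->]]]]. exists (op c y1), y2. repeat split; auto. }
  assert (Iright : forall c y, I y -> I (op y c)).
  { intros c y [y1 [y2 [H1 [H2 ->]]]]. exists y1, (op y2 c). repeat split; auto. }
  assert (IS0 : forall y, I y -> S0 y).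
  { intros y [y1 [y2 [H1 [H2 ->]]]]. auto. }
  assert (II : forall a b, S0 a -> S0 b -> I (op a b)).
  { intros a b Ha Hb. exists a, b. auto. }
  assert (Iz : I z).
  { exists z, z. repeat split; auto. symmetry. apply (Hzero z Hz). }
  assert (zu : op z u = z).
  { assert (S0 (op z u)) by auto.
    rewrite <- (proj1 (Hzero z Hz)) at 1. rewrite <- Hass. apply (Hzero _ H). }
  set (R0 := fun a b => a = b \/ (S0 a /\ S0 b)).
  assert (R0c : is_congruence op R0).
  { unfold R0; repeat split.
    - intros; left; reflexivity.
    - intros a b [H|H]; [left; auto | right; tauto].
    - intros a b c [<-|H1] [<-|H2]; auto; right; tauto.
    - intros a b c [<-|H1]; [left; reflexivity| right; split; apply HL; tauto].
    - intros a b c [<-|H1]; [left; reflexivity| right; split; apply HR; tauto]. }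
  assert (Key : forall r, is_congruence op r -> r u v -> forall a, S0 a -> r a z).
  { intros r Hr Hruv a Ha.
    destruct (Hchain r R0 Hr R0c) as [H1|H1].
    - exfalso. destruct (H1 u v Hruv) as [E|[E _]]; auto.
    - apply H1. right; auto. }
  set (Pt := fun y => S0 y /\ (I y \/ op u y = y)).
  assert (PtL : forall c y, Pt y -> Pt (op c y)).
  { intros c y [Hy [Hi|He]]; split; auto.
    destruct (Hcov c) as [Hc|Hc].
    - left; auto.
    - right. rewrite Hass. rewrite (rz u c); [reflexivity|left; reflexivity|exact Hc]. }
  assert (PtR : forall c y, Pt y -> Pt (op y c)).
  { intros c y [Hy [Hi|He]]; split; auto.
    right. rewrite Hass, He. reflexivity. }
  assert (IPt : forall y, I y -> Pt y).
  { intros y Hy; split; auto. }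

  assert (A0 : forall c, S0 c -> Pt (op c u)).
  { set (r := fun a b => a = b \/ (S1 a /\ S1 b) \/
          (S0 a /\ S0 b /\ ((Pt (op a u) /\ Pt (op b u)) \/ op a u = op b u))).
    assert (Hr : is_congruence op r).
    { unfold r; repeat split.
      - intros; left; reflexivity.
      - intros a b [H|[H|[H1 [H2 [H3|H3]]]]].
        + left; auto.
        + right; left; tauto.
        + right; right; repeat split; auto; left; tauto.
        + right; right; repeat split; auto.
      - intros a b c H1 H2.
        destruct H1 as [<-|[[Ha Hb]|[Ha [Hb Hab]]]]; [exact H2| |].
        + destruct H2 as [<-|[[Hb' Hc]|[Hb' [Hc Hbc]]]].
          * right; left; auto.
          * right; left; auto.
          * exfalso; eauto.
        + destruct H2 as [<-|[[Hb' Hc]|[Hb' [Hc Hbc]]]].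
          * right; right; auto.
          * exfalso; eauto.
          * right; right; repeat split; auto.
            destruct Hab as [[P1 P2]|E1]; destruct Hbc as [[P3 P4]|E2].
            -- left; auto.
            -- left; rewrite <- E2; auto.
            -- left; rewrite E1; auto.
            -- right; congruence.
      - intros a b c H.
        destruct H as [<-|[[Ha Hb]|[Ha [Hb Hab]]]]; [left; reflexivity| |].
        + destruct (Hcov c) as [Hc|Hc].
          * right; right; repeat split; auto. right.
            rewrite <- !Hass. rewrite (rz a u), (rz b u); auto; left; reflexivity.
          * rewrite (rz c a), (rz c b); auto.
        + right; right; repeat split; auto.
          destruct Hab as [[P1 P2]|E1].
          * left; rewrite <- !Hass; auto.
          * right; rewrite <- !Hass, E1; reflexivity.
      - intros a b c H.
        destruct H as [<-|[[Ha Hb]|[Ha [Hb Hab]]]]; [left; reflexivity| |].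
        + destruct (Hcov c) as [Hc|Hc].
          * right; right.
            assert (forall w, S1 w -> S0 (op w c) /\ Pt (op (op w c) u)) as Hw.
            { intros w Hw; split; auto. rewrite <- Hass. split; auto.
              right. rewrite Hass, (rz u w); auto; left; reflexivity. }
            destruct (Hw a Ha), (Hw b Hb). repeat split; auto.
          * rewrite (rz a c), (rz b c); auto.
        + destruct (Hcov c) as [Hc|Hc].
          * right; right; repeat split; auto. left; split; apply IPt; apply Iright; apply II; auto.
          * right; right; split; [auto|split; [auto|]].
            rewrite <- !Hass, (rz c u); auto. }
    intros c Hc.
    destruct (Key r Hr (or_intror (or_introl (conj (or_introl eq_refl) (or_intror eq_refl)))) c Hc)
      as [E|[[E _]|[_ [_ [[P1 _]|E]]]]].
    - subst c. rewrite zu. apply IPt; auto.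
    - exfalso; eauto.
    - exact P1.
    - rewrite E, zu. apply IPt; auto. }

  assert (A0v : forall c, S0 c -> Pt (op c v)).
  { intros c Hc. replace (op c v) with (op (op c u) v).
    - apply PtR; auto.
    - rewrite <- Hass, Huv'; reflexivity. }
  assert (B1 : forall a, S0 a -> I a \/ op u a = a).
  { set (r := fun a b => a = b \/ (S1 a /\ S1 b) \/ (Pt a /\ Pt b)).
    assert (A1 : forall c w, S0 c -> S1 w -> Pt (op c w)).
    { intros c w Hc [-> | ->]; auto. }
    assert (Hr : is_congruence op r).
    { unfold r; repeat split.
      - intros; left; reflexivity.
      - intros a b [H|[H|H]]; [left; auto | right; left; tauto | right; right; tauto].
      - intros a b c H1 H2.
        destruct H1 as [<-|[[Ha Hb]|[Ha Hb]]]; [exact H2| |];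
        destruct H2 as [<-|[[Hb' Hc]|[Hb' Hc]]]; auto.
        + exfalso; apply (dis b); [apply Hb'|exact Hb].
        + exfalso; apply (dis b); [apply Hb|exact Hb'].
      - intros a b c H.
        destruct H as [<-|[[Ha Hb]|[Ha Hb]]]; [left; reflexivity| |].
        + destruct (Hcov c) as [Hc|Hc].
          * right; right; split; apply A1; auto.
          * rewrite (rz c a), (rz c b); auto.
        + right; right; split; apply PtL; auto.
      - intros a b c H.
        destruct H as [<-|[[Ha Hb]|[Ha Hb]]]; [left; reflexivity| |].
        + destruct (Hcov c) as [Hc|Hc].
          * right; right.
            assert (forall w, S1 w -> Pt (op w c)) as Hw.
            { intros w Hw; split; auto.
              right. rewrite Hass, (rz u w); auto. }
            split; apply Hw; auto.
          * rewrite (rz a c), (rz b c); auto.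
        + right; right; split; apply PtR; auto. }
    intros c Hc.
    destruct (Key r Hr (or_intror (or_introl (conj Hu1 Hv1))) c Hc)
      as [E|[[E _]|[[_ P1] _]]].
    - subst c. left; auto.
    - exfalso; eauto.
    - exact P1. }

  assert (fixw : forall w y, S1 w -> op u y = y -> op w y = y).
  { intros w y Hw Hy. rewrite <- Hy at 1. rewrite Hass, (rz w u); auto. }
  assert (B2 : forall a, S0 a -> I (op a u)).
  { set (r := fun a b => a = b \/ (S1 a /\ S1 b) \/
          (S0 a /\ S0 b /\ (op a u = op b u \/ (I (op a u) /\ I (op b u))))).
    assert (Hr : is_congruence op r).
    { unfold r; repeat split.
      - intros; left; reflexivity.
      - intros a b [H|[H|[H1 [H2 [H3|H3]]]]].
        + left; auto.
        + right; left; tauto.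
        + right; right; repeat split; auto.
        + right; right; repeat split; auto; right; tauto.
      - intros a b c H1 H2.
        destruct H1 as [<-|[[Ha Hb]|[Ha [Hb Hab]]]]; [exact H2| |].
        + destruct H2 as [<-|[[Hb' Hc]|[Hb' [Hc Hbc]]]].
          * right; left; auto.
          * right; left; auto.
          * exfalso; eauto.
        + destruct H2 as [<-|[[Hb' Hc]|[Hb' [Hc Hbc]]]].
          * right; right; auto.
          * exfalso; eauto.
          * right; right; repeat split; auto.
            destruct Hab as [E1|[P1 P2]]; destruct Hbc as [E2|[P3 P4]].
            -- left; congruence.
            -- right; rewrite E1; auto.
            -- right; rewrite <- E2; auto.
            -- right; auto.
      - intros a b c H.
        destruct H as [<-|[[Ha Hb]|[Ha [Hb Hab]]]]; [left; reflexivity| |].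
        + destruct (Hcov c) as [Hc|Hc].
          * right; right; repeat split; auto. left.
            rewrite <- !Hass. rewrite (rz a u), (rz b u); auto.
          * rewrite (rz c a), (rz c b); auto.
        + right; right; repeat split; auto.
          destruct Hab as [E1|[P1 P2]].
          * left; rewrite <- !Hass, E1; reflexivity.
          * right; rewrite <- !Hass; auto.
      - intros a b c H.
        destruct H as [<-|[[Ha Hb]|[Ha [Hb Hab]]]]; [left; reflexivity| |].
        + destruct (Hcov c) as [Hc|Hc].
          * right; right; repeat split; auto. rewrite <- !Hass.
            assert (Hcu : S0 (op c u)) by auto.
            destruct (B1 _ Hcu) as [Hi|He].
            -- right; auto.
            -- left. rewrite (fixw a), (fixw b); auto.
          * rewrite (rz a c), (rz b c); auto.
        + destruct (Hcov c) as [Hc|Hc].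
          * right; right; split; [auto|split; [auto|right; split; apply Iright; apply II; auto]].
          * right; right; split; [auto|split; [auto|]].
            rewrite <- !Hass, (rz c u); auto. }
    intros c Hc.
    destruct (Key r Hr (or_intror (or_introl (conj Hu1 Hv1))) c Hc)
      as [E|[[E _]|[_ [_ [E|[P1 _]]]]]].
    - subst c. rewrite zu. auto.
    - exfalso; eauto.
    - rewrite E, zu. auto.
    - exact P1. }

  assert (B2v : forall c w, S0 c -> S1 w -> I (op c w)).
  { intros c w Hc [-> | ->]; auto.
    replace (op c v) with (op (op c u) v).
    - apply Iright; auto.
    - rewrite <- Hass, Huv'; reflexivity. }
  set (r := fun a b => a = b \/ (S1 a /\ S1 b) \/ (I a /\ I b)).
  assert (Hr : is_congruence op r).
  { unfold r; repeat split.
    - intros; left; reflexivity.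
    - intros a b [H|[H|H]]; [left; auto | right; left; tauto | right; right; tauto].
    - intros a b c H1 H2.
      destruct H1 as [<-|[[Ha Hb]|[Ha Hb]]]; [exact H2| |];
      destruct H2 as [<-|[[Hb' Hc]|[Hb' Hc]]]; auto.
      + exfalso; apply (dis b); [apply IS0; apply Hb'|exact Hb].
      + exfalso; apply (dis b); [apply IS0; apply Hb|exact Hb'].
    - intros a b c H.
      destruct H as [<-|[[Ha Hb]|[Ha Hb]]]; [left; reflexivity| |].
      + destruct (Hcov c) as [Hc|Hc].
        * right; right; split; apply B2v; auto.
        * rewrite (rz c a), (rz c b); auto.
      + right; right; split; apply Ileft; auto.
    - intros a b c H.
      destruct H as [<-|[[Ha Hb]|[Ha Hb]]]; [left; reflexivity| |].
      + destruct (Hcov c) as [Hc|Hc].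
        * destruct (B1 c Hc) as [Hi|He].
          -- right; right; split; apply Ileft; auto.
          -- left. rewrite (fixw a), (fixw b); auto.
        * rewrite (rz a c), (rz b c); auto.
      + right; right; split; apply Iright; auto. }
  destruct (Key r Hr (or_intror (or_introl (conj Hu1 Hv1))) x Hx)
    as [E|[[E _]|[P1 _]]].
  - subst x. auto.
  - eauto.
  - auto.
Qed.
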